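(* Let $v\ge2$, $\epsilon>0$, and let $0\le k_1<k_2\le v$ be integers with $(k_1,k_2)\neq(0,v)$. Then $L(v,k_1,\epsilon)\le L(v,k_2,\epsilon)$ if and only if $e^\epsilon\ge E(k_1,k_2;v)$.
   Context: For $1\le k\le v-1$, $L(v,k,\epsilon)=\frac{(ke^\epsilon+v-k)^2}{k(v-k)}$, and $L(v,0,\epsilon)=L(v,v,\epsilon)=\infty$. For $0\le k_1<k_2\le v$ with $(k_1,k_2)\neq(0,v)$: $E(k_1,k_2;v)=\sqrt{\frac{(v-k_1)(v-k_2)}{k_1k_2}}$ if $k_1\ge1$ (so $E(k_1,v;v)=0$), and $E(0,k_2;v)=\infty$. *)

(* Defs.v *)
From Stdlib Require Import Reals.
From Coquelicot Require Import Rbar.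
Open Scope R_scope.

Definition L (v k : nat) (eps : R) : Rbar :=
  if (Nat.eqb k 0 || Nat.eqb k v)%bool then p_infty
  else Finite ((INR k * exp eps + INR v - INR k) ^ 2 / (INR k * (INR v - INR k))).

Definition E (k1 k2 v : nat) : Rbar :=
  if Nat.eqb k1 0 then p_infty
  else Finite (sqrt ((INR v - INR k1) * (INR v - INR k2) / (INR k1 * INR k2))).

(* Main.v *)
Require Import Defs.
From Stdlib Require Import Reals Lra Lia Psatz.
From Coquelicot Require Import Rbar.
Open Scope R_scope.

Lemma sqrt_le_iff (Q a : R) : 0 <= Q -> 0 <= a -> (sqrt Q <= a <-> Q <= a * a).
Proof.
  intros HQ Ha; split; intro H.
  - rewrite <- (sqrt_sqrt Q HQ). apply Rmult_le_compat; auto using sqrt_pos.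
  - rewrite <- (sqrt_square a Ha). apply sqrt_le_1_alt; exact H.
Qed.

Lemma key (k1 k2 v a : R) : 0 < k1 -> k1 < k2 -> k2 < v -> 0 < a ->
  ((k1 * a + v - k1) ^ 2 / (k1 * (v - k1)) <= (k2 * a + v - k2) ^ 2 / (k2 * (v - k2))
   <-> sqrt ((v - k1) * (v - k2) / (k1 * k2)) <= a).
Proof.
  intros H1 H12 H2 Ha.
  set (X := (k2 * a + v - k2) ^ 2 / (k2 * (v - k2)) - (k1 * a + v - k1) ^ 2 / (k1 * (v - k1))).
  assert (HD : 0 < k1*k2*(v-k1)*(v-k2)).
  { assert (0 < k1*k2) by nra. assert (0 < (v-k1)*(v-k2)) by nra. nra. }
  assert (Hd : X * (k1*k2*(v-k1)*(v-k2)) = (v*(k2-k1)) * (a*a*k1*k2 - (v-k1)*(v-k2))).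
  { unfold X; field; repeat split; lra. }
  assert (HN : 0 < v*(k2-k1)) by nra.
  assert (Hk : 0 < k1*k2) by nra.
  rewrite sqrt_le_iff; [| | lra].
  2:{ unfold Rdiv; apply Rmult_le_pos; [nra|]. apply Rlt_le, Rinv_0_lt_compat; lra. }
  set (Q := (v - k1) * (v - k2) / (k1 * k2)).
  assert (HQ : Q * (k1*k2) = (v - k1) * (v - k2)) by (unfold Q; field; lra).
  assert (HQe : Q <= a * a <-> (v-k1)*(v-k2) <= a*a*k1*k2) by (split; intro; nra).
  rewrite HQe.
  split; intro H.
  - assert (0 <= X) by (unfold X; lra). nra.
  - assert (0 <= X) by nra. unfold X in *; lra.
Qed.

Theorem lemma2 (v k1 k2 : nat) (eps : R) :
  (2 <= v)%nat -> 0 < eps -> (k1 < k2)%nat -> (k2 <= v)%nat ->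
  ~ (k1 = 0%nat /\ k2 = v) ->
  (Rbar_le (L v k1 eps) (L v k2 eps) <-> Rbar_le (E k1 k2 v) (Finite (exp eps))).
Proof.
  intros Hv He H12 H2v Hn.
  unfold L, E.
  destruct (Nat.eqb_spec k1 0) as [Z1|Z1].
  - assert (k2 <> v) by tauto.
    destruct (Nat.eqb_spec k2 0); [lia|].
    destruct (Nat.eqb_spec k2 v); [lia|].
    simpl. tauto.
  - destruct (Nat.eqb_spec k1 v); [lia|].
    destruct (Nat.eqb_spec k2 0); [lia|].
    destruct (Nat.eqb_spec k2 v) as [V2|V2].
    + simpl. subst k2. rewrite Rminus_diag, Rmult_0_r.
      unfold Rdiv; rewrite Rmult_0_l, sqrt_0.
      split; intros _; first [exact I | apply Rlt_le, exp_pos].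
    + simpl.
      apply key.
      * apply lt_0_INR; lia.
      * apply lt_INR; lia.
      * apply lt_INR; lia.
      * apply exp_pos.
Qed.
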